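(* For every odd integer $s\ge5$ there exists a linear $(2,s-1,s,2)$-AONT.
   Context: A linear $(t_i,t_o,s,q)$-AONT is given by an invertible $s\times s$ matrix $M$ over $\mathbb{F}_q$ defining the map $\mathbf{x}\mapsto\mathbf{y}=\mathbf{x}M^{-1}$ on row vectors of $\mathbb{F}_q^s$, such that for every set $I$ of $t_i$ input coordinates and every set $J$ of $s-t_o$ output coordinates, the pair $((x_i)_{i\in I},(y_j)_{j\in J})$ takes every value in $\mathbb{F}_q^{t_i+s-t_o}$ equally often as $\mathbf{x}$ ranges over $\mathbb{F}_q^s$. Equivalently, $M$ is invertible and every $t_o\times t_i$ submatrix of $M$ has rank $t_i$. *)

(* Defs.v *)
From mathcomp Require Import all_boot all_algebra.
Set Implicit Arguments. Unset Strict Implicit. Unset Printing Implicit Defensive.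
Import GRing.Theory.
Local Open Scope ring_scope.

(* A linear (t_i, t_o, s, q)-AONT over a finite field F (with #|F| = q) is an
   invertible s x s matrix M such that every t_o x t_i submatrix has rank t_i. *)
Definition is_linear_AONT (F : finFieldType) (ti to s : nat) (M : 'M[F]_s) : Prop :=
  M \in unitmx /\
  forall (rows : 'I_to -> 'I_s) (cols : 'I_ti -> 'I_s),
    injective rows -> injective cols -> \rank (mxsub rows cols M) = ti.

(* Main.v *)
Require Import Defs.
From mathcomp Require Import all_boot all_algebra zify.
Import GRing.Theory.
Set Implicit Arguments.
Local Open Scope ring_scope.
Lemma F2cases (x : 'F_2) : x = 0 \/ x = 1.
Proof. case: x => [[|[|n]] H]. 
- by left; apply/val_inj.
- by right; apply/val_inj.
- exfalso; move: H; rewrite (_ : Zp_trunc (pdiv 2) = 0%N) //.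
Qed.
Lemma F2_11 : (1 + 1 : 'F_2) = 0. Proof. apply/val_inj. reflexivity. Qed.
Lemma bF2 (b1 b2 : bool) : ((b1%:R + b2%:R : 'F_2) = (b1 != b2)%:R).
Proof. case: b1; case: b2 => /=; rewrite ?addr0 ?add0r ?F2_11 //. Qed.
Lemma F2ne (b : bool) : ((b%:R : 'F_2) != 0) = b.
Proof. by case: b; rewrite ?oner_neq0 ?eqxx. Qed.

Definition fn (s i j : nat) : bool :=
  if j == s.-1 then [|| i == 0, i == 2 | i == s.-1]%N else (i == j) || (i == j.+1).

Lemma combA s j : (5 <= s)%N -> (j < s)%N -> exists r1 r2,
  [/\ (r1 < s)%N, (r2 < s)%N, r1 != r2, fn s r1 j & fn s r2 j].
Proof.
move=> s5 js; rewrite /fn; case: eqP => Hj.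
- exists 0%N, s.-1; split => //; lia.
- exists j, j.+1; rewrite !eqxx ?orbT; split => //; lia.
Qed.

Lemma combB s j k : (5 <= s)%N -> (j < s)%N -> (k < s)%N -> j != k -> exists r1 r2,
  [/\ (r1 < s)%N, (r2 < s)%N, r1 != r2, fn s r1 j != fn s r1 k & fn s r2 j != fn s r2 k].
Proof.
move=> s5.
wlog: j k / (j < k)%N.
  move=> W js ks jk; case: (ltngtP j k) => h.
  - exact: W.
  - have [r1 [r2 [? ? ? ? ?]]] := W k j h ks js (negbT (ltn_eqF h)).
    by exists r1, r2; split => //; rewrite eq_sym.
  - by rewrite h eqxx in jk.
move=> jk js ks _; rewrite /fn.
have jn : j != s.-1 by apply/eqP; lia.
rewrite (negbTE jn).
case: eqP => Hk.
- case: (j =P 0%N) => j0.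
  + exists 1%N, 2%N; split; lia.
  + case: (j =P s.-2) => j2.
    * exists 0%N, j; split; lia.
    * case: (j =P 1%N) => j1.
      - exists 0%N, 1%N; split; lia.
      - exists 0%N, j.+1; split; lia.
- exists j, k.+1; split; lia.
Qed.
Lemma miss s (rows : 'I_s.-1 -> 'I_s) : injective rows -> forall r1 r2 : 'I_s,
  r1 != r2 -> exists i, (rows i == r1) || (rows i == r2).
Proof.
move=> inj r1 r2 ne.
case: (boolP [exists i, (rows i == r1) || (rows i == r2)]) => [/existsP//|/existsPn H].
exfalso.
have: (#|[set rows i | i in 'I_s.-1]| <= #|~: [set r1; r2]|)%N.
  apply: subset_leq_card; apply/subsetP => x /imsetP [i _ ->].
  by rewrite !inE; move: (H i); rewrite negb_or.
have := cardsC [set r1; r2]; rewrite cards2 ne card_imset // !card_ord.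
case: s rows inj r1 r2 ne H => [|s] rows inj [] //.
move=> /= *; lia.
Qed.
Definition Mx s : 'M['F_2]_s := \matrix_(i, j) ((fn s i j)%:R : 'F_2).

Lemma F2eq (x y : 'F_2) : x + y = 0 -> x = y.
Proof.
by case: (F2cases x) => ->; case: (F2cases y) => ->; rewrite ?F2_11 ?addr0 ?add0r // => /eqP; rewrite oner_eq0.
Qed.

Lemma I2cases (j : 'I_2) : j = 0 \/ j = 1.
Proof. case: j => [[|[|n]] H]; [left|right|]; try exact/val_inj. by []. Qed.

Lemma rank2 s (rows : 'I_s.-1 -> 'I_s) (cols : 'I_2 -> 'I_s) : (5 <= s)%N ->
  injective rows -> injective cols -> \rank (mxsub rows cols (Mx s)) = 2%N.
Proof.
move=> s5 ri ci; rewrite -mxrank_tr; apply/eqP; apply: inj_row_free => v Hv.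
have E i : (v *m (mxsub rows cols (Mx s))^T) 0 i =
   v 0 0 * (fn s (rows i) (cols 0))%:R + v 0 1 * (fn s (rows i) (cols 1))%:R.
  rewrite !mxE big_ord_recl big_ord1 !mxE.
  by have -> : (lift ord0 ord0 : 'I_2) = 1 by apply/val_inj.
have contra : forall r1 r2 : 'I_s, r1 != r2 ->
   (forall r : 'I_s, (r == r1) || (r == r2) ->
      v 0 0 * (fn s r (cols 0))%:R + v 0 1 * (fn s r (cols 1))%:R != 0) -> False.
  move=> r1 r2 ne Hr; have [i Hi] := miss ri r1 r2 ne; have := Hr _ Hi.
  by rewrite -E Hv mxE eqxx.
have c01 : (val (cols 0) != val (cols 1)).
  by apply/negP => /eqP /val_inj /ci.
have fromA : forall j : 'I_s, (forall r : 'I_s, fn s r j -> v 0 0 * (fn s r (cols 0))%:R + v 0 1 * (fn s r (cols 1))%:R != 0) -> False.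
  move=> j H; have [r1 [r2 [h1 h2 ne f1 f2]]] := @combA s j s5 (ltn_ord j).
  apply: (contra (Ordinal h1) (Ordinal h2)); first exact: ne.
  move=> r /orP[] /eqP ->; [exact: (H (Ordinal h1) f1)|exact: (H (Ordinal h2) f2)].
have : v 0 0 = 0 /\ v 0 1 = 0.
  case: (F2cases (v 0 0)) => e0; case: (F2cases (v 0 1)) => e1 //; exfalso.
  - apply: (fromA (cols 1)) => r fr; by rewrite e0 e1 mul0r mul1r add0r F2ne.
  - apply: (fromA (cols 0)) => r fr; by rewrite e0 e1 mul0r mul1r addr0 F2ne.
  - have [r1 [r2 [h1 h2 ne f1 f2]]] := @combB s (cols 0) (cols 1) s5 (ltn_ord (cols 0)) (ltn_ord (cols 1)) c01.
    apply: (contra (Ordinal h1) (Ordinal h2)); first exact: ne.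
    by move=> r /orP[] /eqP ->; rewrite e0 e1 !mul1r bF2 F2ne.
case=> h0 h1; apply/rowP => j; rewrite mxE.
by case: (I2cases j) => ->.
Qed.

Lemma fn_mid s i k : (k.+1 < s)%N -> fn s i k = (i == k) || (i == k.+1).
Proof. by move=> h; rewrite /fn ifN //; apply/eqP; lia. Qed.
Lemma fn_last s i : fn s i s.-1 = [|| i == 0, i == 2 | i == s.-1]%N.
Proof. by rewrite /fn eqxx. Qed.

Lemma unitM s : (5 <= s)%N -> Mx s \in unitmx.
Proof.
move=> s5; rewrite -row_free_unit; apply: inj_row_free => v Hv.
have Hs (j : 'I_s) : \sum_(i : 'I_s | fn s i j) v 0 i = 0.
  have H0 := congr1 (fun M : 'rV_s => M 0 j) Hv; rewrite /= !mxE in H0.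
  transitivity (\sum_i v 0 i * Mx s i j); last exact: H0.
  rewrite big_mkcond; apply: eq_bigr => i _.
  by rewrite mxE; case: fn; rewrite ?mulr1 ?mulr0.
have step k (hk : (k.+1 < s)%N) : v 0 (Ordinal (ltnW hk)) = v 0 (Ordinal hk).
  apply: F2eq; have := Hs (Ordinal (ltnW hk)).
  rewrite (bigD1 (Ordinal (ltnW hk))) /=; last by rewrite fn_mid //=; lia.
  rewrite (bigD1 (Ordinal hk)) /=; last by rewrite fn_mid //= -?val_eqE /=; lia.
  rewrite big1 ?addr0 ?addrA // => i /andP[/andP[]].
  by rewrite fn_mid //= -?val_eqE /=; lia.
have s0 : (0 < s)%N by lia.
have all k (hk : (k < s)%N) : v 0 (Ordinal hk) = v 0 (Ordinal s0).
  elim: k hk => [|k IH] hk; first by congr (v 0 _); apply: val_inj.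
  by rewrite -step; rewrite -(IH (ltnW hk)); congr (v 0 _); apply: val_inj.
have sl : (s.-1 < s)%N by lia.
have s2 : (2 < s)%N by lia.
have : v 0 (Ordinal s0) + v 0 (Ordinal s2) + v 0 (Ordinal sl) = 0.
  rewrite -(Hs (Ordinal sl)).
  rewrite (bigD1 (Ordinal s0)) /=; last by rewrite fn_last /=; lia.
  rewrite (bigD1 (Ordinal s2)) /=; last by rewrite fn_last -?val_eqE /=; lia.
  rewrite (bigD1 (Ordinal sl)) /=; last by rewrite fn_last -?val_eqE /=; lia.
  rewrite big1 ?addr0 ?addrA // => i /andP[/andP[/andP[]]].
  by rewrite fn_last -?val_eqE /=; lia.
rewrite !all; case: (F2cases (v 0 (Ordinal s0))) => e0; rewrite e0 ?F2_11 ?add0r.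
  move=> _; apply/rowP => j; rewrite mxE.
  have -> : j = Ordinal (ltn_ord j) by apply: val_inj.
  by rewrite all.
by move/eqP; rewrite oner_eq0.
Qed.

Theorem mainTheorem14 (s : nat) :
  odd s -> (5 <= s)%N ->
  exists M : 'M['F_2]_s, is_linear_AONT 2 s.-1 M.
Proof.
move=> _ s5; exists (Mx s); split; first exact: unitM.
by move=> rows cols ri ci; apply: rank2.
Qed.
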